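(* Let $U$ be a subgroup of $G^*$ and let $F$ be a $U$-symmetric matching mechanism. Then $F$ admits a refinement $H$ (a matching mechanism with $H(p)\subseteq F(p)$ for all $p\in\mathcal{P}$) that is $U$-symmetric and resolute if and only if $F(p)\cap C^U(p)\neq\varnothing$ for every $p\in\mathcal{P}$.
   Context: Fix $n\ge 2$, $W=\{1,\dots,n\}$, $M=\{n+1,\dots,2n\}$, $I=W\cup M$. Permutations compose right-to-left. A preference profile is a function $p$ on $I$ assigning to each $x\in W$ a linear order $p(x)$ on $M$ and to each $y\in M$ a linear order $p(y)$ on $W$; $\mathcal{P}$ is the set of preference profiles. A matching is a permutation $\mu$ of $I$ with $\mu(W)=M$, $\mu(M)=W$ and $\mu(\mu(z))=z$ for all $z$; $\mathcal{M}$ is the set of matchings. $G^*=\{\varphi\in\mathrm{Sym}(I):\{\varphi(W),\varphi(M)\}=\{W,M\}\}$. For a linear order $R$ on $X\subseteq I$ and $\varphi\in\mathrm{Sym}(I)$, $\varphi R$ is the relation on $\varphi(X)$ with $(a,b)\in\varphi R$ iff $(\varphi^{-1}(a),\varphi^{-1}(b))\in R$. For $p\in\mathcal{P}$, $\varphi\in G^*$, $p^\varphi(z)=\varphi\,p(\varphi^{-1}(z))$. For a permutation $\mu$, $\mu^\varphi=\varphi\mu\varphi^{-1}$; $S^\varphi=\{\mu^\varphi:\mu\in S\}$. A matching mechanism is a correspondence $F$ from $\mathcal{P}$ to $\mathcal{M}$; resolute if $|F(p)|=1$ for all $p$; $U$-symmetric if $F(p^\varphi)=F(p)^\varphi$ for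 all $p$ and $\varphi\in U$. For $U\le G^*$ and $p\in\mathcal{P}$, $\mathrm{Stab}_U(p)=\{\varphi\in U:p^\varphi=p\}$ and $C^U(p)=\{\mu\in\mathcal{M}:\mu^\varphi=\mu \text{ for all }\varphi\in\mathrm{Stab}_U(p)\}$. *)

(* Defs.v *)
From mathcomp Require Import all_boot all_order all_fingroup.
Set Implicit Arguments. Unset Strict Implicit. Unset Printing Implicit Defensive.

Local Open Scope group_scope.

Section Defs.
Variable n : nat.

(* Agents: I = {0,...,2n-1}; W = {0..n-1} (paper's 1..n), M = {n..2n-1}
   (paper's n+1..2n). *)
Definition I := 'I_(n + n).
Definition Wset : {set I} := [set i : I | (i < n)%N].
Definition Mset : {set I} := [set i : I | (n <= i)%N].

Definition relI := {ffun I * I -> bool}.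

Definition linear_order_on (X : {set I}) (R : relI) : Prop :=
  [/\ (forall a b, R (a, b) -> a \in X /\ b \in X),
      (forall a, a \in X -> R (a, a)),
      (forall a b, R (a, b) -> R (b, a) -> a = b),
      (forall a b c, R (a, b) -> R (b, c) -> R (a, c)) &
      (forall a b, a \in X -> b \in X -> R (a, b) || R (b, a))].

Definition prof := {ffun I -> relI}.

Definition is_profile (p : prof) : Prop :=
  (forall x, x \in Wset -> linear_order_on Mset (p x)) /\
  (forall y, y \in Mset -> linear_order_on Wset (p y)).

Definition Gstar : {set {perm I}} :=
  [set phi : {perm I} |
     ((phi @: Wset == Wset) && (phi @: Mset == Mset)) ||
     ((phi @: Wset == Mset) && (phi @: Mset == Wset))].

Definition act_rel (phi : {perm I}) (R : relI) : relI :=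
  [ffun ab : I * I => R (phi^-1 ab.1, phi^-1 ab.2)].

Definition act_prof (phi : {perm I}) (p : prof) : prof :=
  [ffun z => act_rel phi (p (phi^-1 z))].

Definition is_matching (mu : {perm I}) : Prop :=
  [/\ mu @: Wset = Mset, mu @: Mset = Wset & forall z, mu (mu z) = z].

(* Conjugation: MathComp's  mu ^ phi = phi^-1 * mu * phi  where
   (s * t) x = t (s x); hence (mu ^ phi) z = phi (mu (phi^-1 z)), i.e. the
   paper's phi mu phi^-1 (right-to-left composition). *)
Lemma conj_permE (mu phi : {perm I}) z : (mu ^ phi) z = phi (mu (phi^-1 z)).
Proof. by rewrite /conjg !permM. Qed.

Definition mechanism (F : prof -> {set {perm I}}) : Prop :=
  forall p, is_profile p -> forall mu, mu \in F p -> is_matching mu.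

Definition resolute (F : prof -> {set {perm I}}) : Prop :=
  forall p, is_profile p -> #|F p| = 1%N.

Definition Usymmetric (U : {set {perm I}}) (F : prof -> {set {perm I}}) : Prop :=
  forall p phi, is_profile p -> phi \in U -> F (act_prof phi p) = F p :^ phi.

Definition refines (H F : prof -> {set {perm I}}) : Prop :=
  forall p, is_profile p -> H p \subset F p.

Definition Stab (U : {set {perm I}}) (p : prof) : {set {perm I}} :=
  [set phi in U | act_prof phi p == p].

Definition CU (U : {set {perm I}}) (p : prof) : {set {perm I}} :=
  [set mu : {perm I} | [&& (mu @: Wset == Mset), (mu @: Mset == Wset),
                          [forall z, mu (mu z) == z] &
                          [forall phi in Stab U p, mu ^ phi == mu]]].

End Defs.

(* Main.v *)
Require Import Defs.
From mathcomp Require Import all_boot all_order all_fingroup.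
Set Implicit Arguments. Unset Strict Implicit. Unset Printing Implicit Defensive.

Local Open Scope group_scope.

Section Aux.
Variable n : nat.

Definition aprof (p : prof n) (phi : {perm I n}) := act_prof phi p.

Lemma aprof1 : aprof^~ 1 =1 id.
Proof.
move=> p; apply/ffunP=> z; rewrite /aprof /act_prof ffunE invg1.
apply/ffunP=> ab; rewrite /act_rel ffunE; case: ab => a b /=.
by rewrite invg1 !perm1.
Qed.

Lemma aprofM : forall x, act_morph aprof x.
Proof.
move=> p a b; apply/ffunP=> z; rewrite /aprof /act_prof !ffunE.
apply/ffunP=> ab; rewrite /act_rel !ffunE invMg !permM.
by [].
Qed.

Definition prof_action := TotalAction aprof1 aprofM.

Lemma act_profM (a b : {perm I n}) (p : prof n) :
  act_prof (a * b) p = act_prof b (act_prof a p).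
Proof. by have := aprofM p a b. Qed.

Lemma act_prof1 (p : prof n) : act_prof 1 p = p.
Proof. exact: aprof1. Qed.

Variable U : {group {perm I n}}.
Variable F : prof n -> {set {perm I n}}.

Definition rep (q : prof n) := odflt q [pick r in orbit prof_action U q].

Definition Fixset (r : prof n) : {set {perm I n}} :=
  [set mu | [forall phi in Stab U r, mu ^ phi == mu]].

Definition Hm (q : prof n) : {set {perm I n}} :=
  let r := rep q in
  match [pick mu in F r :&: Fixset r] with
  | Some mu => [set mu ^ phi | phi in U & act_prof phi r == q]
  | None => set0
  end.

Lemma rep_spec q : exists2 chi, chi \in U & act_prof chi (rep q) = q.
Proof.
rewrite /rep; case: pickP => [r Hr|H0]; last first.
  by have := H0 q; rewrite orbit_refl.
case/orbitP: Hr => psi Hpsi <-; exists psi^-1; first by rewrite groupV.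
by rewrite -act_profM mulgV act_prof1.
Qed.

Lemma rep_act q phi : phi \in U -> rep (act_prof phi q) = rep q.
Proof.
move=> Hphi; rewrite /rep.
have E := orbit_act prof_action q Hphi.
rewrite (_ : orbit prof_action U (act_prof phi q) = orbit prof_action U q) //.
by case: pickP => // H0; have := H0 q; rewrite orbit_refl.
Qed.

Lemma H_single r q chi mu : chi \in U -> act_prof chi r = q ->
  mu \in Fixset r ->
  [set mu ^ phi | phi in U & act_prof phi r == q] = [set mu ^ chi].
Proof.
move=> HchiU Hchi Hmu; apply/setP=> x; apply/imsetP/set1P.
- case=> phi; rewrite inE => /andP [HphiU /eqP Hphi] ->.
  have HS : phi * chi^-1 \in Stab U r.
    rewrite inE groupM ?groupV //= act_profM Hphi -Hchi -act_profM.
    by rewrite mulgV act_prof1.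
  move: Hmu; rewrite inE => /forall_inP /(_ _ HS) /eqP.
  rewrite conjgM => Hm; by rewrite -{2}Hm conjgKV.
- move=> ->; exists chi => //; by rewrite inE HchiU Hchi eqxx.
Qed.

End Aux.

Theorem theorem1 (n : nat) (hn : (2 <= n)%N)
  (U : {group {perm I n}}) (hU : U \subset Gstar n)
  (F : prof n -> {set {perm I n}})
  (hF : mechanism F) (hFsym : Usymmetric U F) :
  (exists H : prof n -> {set {perm I n}},
      [/\ mechanism H, refines H F, Usymmetric U H & resolute H])
  <->
  (forall p : prof n, is_profile p -> F p :&: CU U p != set0).
Proof.
split.
- case=> H [hHm hHr hHs hHres] p Hp.
  have [mu Hmu] := cards1P (introT eqP (hHres p Hp)).
  have muH : mu \in H p by rewrite Hmu set11.
  have [h1 h2 h3] := hHm p Hp mu muH.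
  apply/set0Pn; exists mu; rewrite inE (subsetP (hHr p Hp)) //= inE.
  rewrite h1 h2 !eqxx /=; apply/andP; split; first by apply/forallP=> z; rewrite h3.
  apply/forall_inP=> phi; rewrite inE => /andP [HphiU /eqP Hphi].
  have := hHs p phi Hp HphiU; rewrite Hphi Hmu conjg_set1.
  by move/set1_inj => <-.
- move=> hC.
  have Hne : forall p, is_profile p ->
      F (rep U p) :&: Fixset U (rep U p) != set0.
    move=> p Hp; have [chi HchiU Hchi] := rep_spec U p.
    set r := rep U p in Hchi *.
    have Hr : r = act_prof chi^-1 p by rewrite -Hchi -act_profM mulgV act_prof1.
    case/set0Pn: (hC p Hp) => mu; rewrite inE => /andP [muF muC].
    apply/set0Pn; exists (mu ^ chi^-1); rewrite inE Hr.
    rewrite (hFsym p chi^-1 Hp) ?groupV // memJ_conjg muF /= inE.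
    apply/forall_inP=> phi; rewrite inE => /andP [HphiU /eqP Hphi].
    have HS : chi^-1 * phi * chi \in Stab U p.
      rewrite inE !groupM ?groupV //= !act_profM Hphi -act_profM mulVg.
      by rewrite act_prof1.
    move: muC; rewrite inE => /and4P [_ _ _ /forall_inP /(_ _ HS) /eqP Hm].
    by rewrite -conjgM -{2}Hm !conjgM conjgK.
  have Href : refines (Hm U F) F.
    move=> p Hp; rewrite /Hm.
    case: pickP => [mu Hmu|]; last by rewrite sub0set.
    move: Hmu; rewrite inE => /andP [muF muFix].
    have [chi HchiU Hchi] := rep_spec U p.
    rewrite (H_single HchiU Hchi muFix) sub1set.
    have Hr : rep U p = act_prof chi^-1 p
      by rewrite -{2}Hchi -act_profM mulgV act_prof1.
    by move: muF; rewrite Hr (hFsym p chi^-1 Hp) ?groupV // mem_conjgV.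
  exists (Hm U F); split => //.
  + move=> p Hp mu Hmu; apply: (hF p Hp); exact: (subsetP (Href p Hp)).
  + move=> p phi Hp HphiU; rewrite /Hm (rep_act p HphiU).
    case: pickP => [mu Hmu|]; last by rewrite conj0g.
    move: Hmu; rewrite inE => /andP [muF muFix].
    have [chi HchiU Hchi] := rep_spec U p.
    have Hchi' : act_prof (chi * phi) (rep U p) = act_prof phi p
      by rewrite act_profM Hchi.
    rewrite (H_single HchiU Hchi muFix).
    rewrite (H_single (groupM HchiU HphiU) Hchi' muFix).
    by rewrite conjg_set1 conjgM.
  + move=> p Hp; rewrite /Hm.
    case: pickP => [mu Hmu|H0].
      move: Hmu; rewrite inE => /andP [muF muFix].
      have [chi HchiU Hchi] := rep_spec U p.
      by rewrite (H_single HchiU Hchi muFix) cards1.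
    case/set0Pn: (Hne p Hp) => mu Hmu; by have := H0 mu; rewrite Hmu.
Qed.
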